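(* Let $m,N,N_0\in\mathbb{N}$, $A\in\mathbb{R}^{N\times N_0}$, $B\in\mathbb{R}^{m\times N}$ and $z\in\mathbb{R}^N$. Suppose $R=\{\alpha^q,\alpha^{q+1},\dots,\alpha^{q+r-1}\}\subset\mathbb{R}^{N_0}$ satisfies $|R|\geq N+1$, the sequence $(\alpha^k_1)_{k=q}^{q+r-1}$ is strictly decreasing, and $\alpha^k_j=0$ for all $j>1$ and all $k$. Then there exist $C\in\mathbb{R}^{m\times N_0}$, $v\in\mathbb{R}^m$ and a set $\mathcal{S}\subseteq R$ of the form $\mathcal{S}=\{\alpha^s,\alpha^{s+1},\dots,\alpha^{s+t-1}\}$ (consecutive indices) with $|\mathcal{S}|\geq |R|/(N+1)$ such that $B\rho(A\alpha+z)=C\alpha+v$ for all $\alpha\in\mathcal{S}$.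
   Context: $\rho(t)=\max\{0,t\}$, applied coordinatewise to vectors. *)

(* Defs.v *)
From HB Require Import structures.
From mathcomp Require Import all_boot all_order all_algebra.
Set Implicit Arguments. Unset Strict Implicit. Unset Printing Implicit Defensive.
Import Order.TTheory GRing.Theory Num.Theory.
Local Open Scope ring_scope.

Definition relu (R : realFieldType) (n : nat) (x : 'cV[R]_n) : 'cV[R]_n :=
  map_mx (fun t => Num.max 0 t) x.

(* the set {alpha^a, ..., alpha^(a+l-1)} as a duplicate-free list; its size is the cardinality *)
Definition pts (R : realFieldType) (n : nat) (alpha : nat -> 'cV[R]_n) (a l : nat)
  : seq 'cV[R]_n := undup [seq alpha k | k <- iota a l].

(* Main.v *)
Require Import Defs.
From HB Require Import structures.
From mathcomp Require Import all_boot all_order all_algebra.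
From mathcomp Require Import zify ring lra.
Import Order.TTheory GRing.Theory Num.Theory.
Lemma key n (b : 'I_n -> nat -> bool) q R
 (hsw : forall i k1 k2 k3, q <= k1 -> k1 <= k2 -> k2 <= k3 -> k3 < q + R ->
    b i k1 = b i k3 -> b i k2 = b i k1) :
 forall r, r.+1 <= R ->
 exists s t L, [/\ q <= s, s + t <= q + r.+1,
   (forall i k, s <= k -> k < s + t -> b i k = b i s),
   (0 < L <= r.+1) /\
   (forall i k, q + r.+1 - L <= k -> k < q + r.+1 -> b i k = b i (q + r.+1 - L)) &
   r.+1 <= #|[set i | [exists j : 'I_r.+1, b i (q + j) != b i q]]| * t + L].
Proof.
elim=> [|r IH] hR.
  exists q, 0, 1; split.
  - by [].
  - lia.
  - move=> i k ? ?; lia.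
  - split => // i k ? ?; have -> : k = q + 1 - 1 by lia. by [].
  - by rewrite muln0.
have [s [t [L [h1 h2 h3 [h4 h5] h6]]]] := IH (ltnW hR).
clear IH.
set S := [set i | _] in h6.
set S' := [set i | [exists j : 'I_r.+2, b i (q + j) != b i q]].
have sub : S \subset S'.
  apply/subsetP => i; rewrite !inE => /existsP [j hj].
  by apply/existsP; exists (widen_ord (leqnSn _) j).
have cS := subset_leq_card sub.
case: (boolP [forall i, b i (q + r.+1) == b i (q + r)]) => [/forallP hall|].
  exists s, t, L.+1; split => //; [lia|split; [lia|]|].
  - move=> i k hk hk'.
    have -> : q + r.+2 - L.+1 = q + r.+1 - L by lia.
    case: (ltnP k (q + r.+1)) => hk2; first by apply: h5; lia.
    have -> : k = q + r.+1 by lia.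
    rewrite (eqP (hall i)); apply: h5; lia.
  - nia.
move/forallPn => [i0 hi0].
have hc : forall j', j' <= r -> b i0 (q + j') = b i0 (q + r).
  move=> j' hj'; apply/eqP; apply/negPn/negP => hne.
  have e : b i0 (q + j') = b i0 (q + r.+1).
    by move: hne hi0; case: (b i0 (q + j')); case: (b i0 (q + r.+1)); case: (b i0 (q+r)).
  have H := hsw i0 (q + j') (q + r) (q + r.+1).
  by move: hne; rewrite H ?eqxx //; lia.
have h0 := hc 0 isT; rewrite addn0 in h0.
have ni0 : i0 \notin S.
  rewrite inE; apply/negP => /existsP [j hj].
  by rewrite (hc j (ltn_ord j)) h0 eqxx in hj.
have i0S' : i0 \in S'.
  rewrite inE; apply/existsP; exists (Ordinal (ltnSn r.+1)) => /=.
  by rewrite h0.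
have cS2 : #|S| < #|S'|.
  apply: proper_card; rewrite properE sub /=; apply/negP => /subsetP /(_ _ i0S').
  by rewrite (negbTE ni0).
case: (leqP L t) => hLt.
  exists s, t, 1; split => //; [lia|split; [lia|]|].
  - move=> i k hk hk'; have -> : k = q + r.+2 - 1 by lia. by [].
  - nia.
exists (q + r.+1 - L), L, 1; split => //; [lia|lia| |split; [lia|]|].
- move=> i k hk hk'; apply: h5; lia.
- move=> i k hk hk'; have -> : k = q + r.+2 - 1 by lia. by [].
- nia.
Qed.

Lemma key2 n (b : 'I_n -> nat -> bool) q r
 (hsw : forall i k1 k2 k3, q <= k1 -> k1 <= k2 -> k2 <= k3 -> k3 < q + r ->
    b i k1 = b i k3 -> b i k2 = b i k1) : 0 < r ->
 exists s t, [/\ q <= s, s + t <= q + r,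
   (forall i k, s <= k -> k < s + t -> b i k = b i s) & r <= n.+1 * t].
Proof.
case: r hsw => [//|r] hsw _.
have [s [t [L [h1 h2 h3 [h4 h5] h6]]]] := key _ _ _ _ hsw _ (leqnn r.+1).
set S := [set i | _] in h6.
have cS : #|S| <= n by have := max_card S; rewrite card_ord.
case: (leqP L t) => hLt.
  exists s, t; split => //; nia.
exists (q + r.+1 - L), L; split => //; [lia|lia| |nia].
move=> i k hk hk'; rewrite (h5 i k) ?(h5 i (q + r.+1 - L)) //; lia.
Qed.

Local Open Scope ring_scope.

Theorem lemma5p5 (R : realFieldType) (m N N0 : nat) (hN0 : (0 < N0)%N)
  (A : 'M[R]_(N, N0)) (B : 'M[R]_(m, N)) (z : 'cV[R]_N)
  (alpha : nat -> 'cV[R]_N0) (q r : nat)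
  (hcard : (N.+1 <= size (pts alpha q r))%N)
  (hdec : forall k, (q <= k)%N -> (k.+1 < q + r)%N ->
            alpha k.+1 (Ordinal hN0) 0 < alpha k (Ordinal hN0) 0)
  (hzero : forall k (j : 'I_N0), (q <= k)%N -> (k < q + r)%N ->
            (0 < val j)%N -> alpha k j 0 = 0) :
  exists (C : 'M[R]_(m, N0)) (v : 'cV[R]_m) (s t : nat),
    [/\ (q <= s)%N, (s + t <= q + r)%N,
        (size (pts alpha q r))%:R / (N.+1)%:R <= (size (pts alpha s t))%:R :> R
      & forall k, (s <= k)%N -> (k < s + t)%N ->
          B *m relu (A *m alpha k + z) = C *m alpha k + v].
Proof.
set o := Ordinal hN0.
pose x k := alpha k o 0.
have xdec : forall k1 k2, (q <= k1)%N -> (k1 < k2)%N -> (k2 < q + r)%N -> x k2 < x k1.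
  move=> k1; elim=> [//|k2 IH] h1 h2 h3.
  have := hdec k2 ltac:(lia) h3; rewrite -/(x k2) -/(x k2.+1) => h.
  case: (ltngtP k1 k2) => [hl|hl|->] //.
  - exact: lt_trans h (IH h1 hl ltac:(lia)).
  - lia.
have xle : forall k1 k2, (q <= k1)%N -> (k1 <= k2)%N -> (k2 < q + r)%N -> x k2 <= x k1.
  move=> k1 k2 h1 h2 h3; case: (ltngtP k1 k2) => [hl|hl|->] //.
  - exact: ltW (xdec _ _ h1 hl h3).
  - lia.
have hsize : forall s t, (q <= s)%N -> (s + t <= q + r)%N -> size (pts alpha s t) = t.
  move=> s t h1 h2; rewrite /pts undup_id ?size_map ?size_iota //.
  rewrite map_inj_in_uniq ?iota_uniq // => k1 k2; rewrite !mem_iota => /andP [a1 a2] /andP [b1 b2] e.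
  have ex : x k1 = x k2 by rewrite /x e.
  case: (ltngtP k1 k2) => [hl|hl|//].
  - by have := xdec k1 k2 ltac:(lia) hl ltac:(lia); rewrite ex ltxx.
  - by have := xdec k2 k1 ltac:(lia) hl ltac:(lia); rewrite ex ltxx.
have Ax : forall k (i : 'I_N), (q <= k)%N -> (k < q + r)%N ->
    (A *m alpha k) i 0 = A i o * x k.
  move=> k i h1 h2; rewrite !mxE (bigD1 o) //= big1 ?addr0 // => j hj.
  rewrite hzero ?mulr0 //; rewrite lt0n; apply: contra hj => /eqP e.
  by apply/eqP/val_inj.
pose b (i : 'I_N) k := 0 <= (A *m alpha k + z) i 0.
have hsw : forall i k1 k2 k3, (q <= k1)%N -> (k1 <= k2)%N -> (k2 <= k3)%N -> (k3 < q + r)%N ->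
    b i k1 = b i k3 -> b i k2 = b i k1.
  move=> i k1 k2 k3 h1 h2 h3 h4.
  have E : forall k, (q <= k)%N -> (k < q + r)%N -> (A *m alpha k + z) i 0 = A i o * x k + z i 0.
    by move=> k ? ?; rewrite [LHS]mxE Ax.
  rewrite /b !E; try lia.
  have x12 := xle k1 k2 h1 h2 ltac:(lia).
  have x23 := xle k2 k3 ltac:(lia) h3 h4.
  set a := A i o; set c := z i 0.
  have P : (a * x k2 + c - (a * x k1 + c)) * (a * x k2 + c - (a * x k3 + c)) <= 0.
    have -> : (a * x k2 + c - (a * x k1 + c)) * (a * x k2 + c - (a * x k3 + c))
       = a ^+ 2 * ((x k2 - x k1) * (x k2 - x k3)) by ring.
    rewrite mulr_ge0_le0 ?sqr_ge0 // mulr_le0_ge0 //; by rewrite subr_cp0 || rewrite subr_ge0.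
  case: (lerP 0 (a * x k1 + c)) => e1; case: (lerP 0 (a * x k3 + c)) => e3 //= _.
  - apply/idP; apply: contraT; rewrite -ltNge => e2; nra.
  - apply/negbTE; rewrite -ltNge; apply: contraTlt P => e2; nra.
have [s [t [h1 h2 h3 h4]]] := key2 _ _ _ _ hsw ltac:(rewrite (hsize q r) // in hcard; lia).
pose D : 'M[R]_N := diag_mx (\row_i (if b i s then 1 else 0)).
exists (B *m D *m A), (B *m D *m z), s, t; split => //.
- rewrite (hsize q r) // (hsize s t) // ler_pdivrMr ?ltr0n // -natrM ler_nat; lia.
- move=> k hk hk'.
  have Hr : relu (A *m alpha k + z) = D *m (A *m alpha k + z).
    have hb : forall i, b i k = b i s := fun i => h3 i k hk hk'.
    apply/matrixP => i j; rewrite ord1 mul_diag_mx /relu !mxE -(hb i) /b !mxE.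
    case: ifP => e; rewrite ?mul1r ?mul0r.
    + by rewrite max_r.
    + by rewrite max_l // ltW // ltNge e.
  by rewrite Hr !mulmxDr !mulmxA.
Qed.
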